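(* Let $\lambda \vdash 2$ and $\hat{\lambda} \vdash 3$ be partitions such that the pair $(\lambda,\hat{\lambda})$ is not one of $((2),(3))$, $((2),(2\,1))$, $((1^2),(2\,1))$. Let $\mathfrak{r} \subset \mathbb{K}[\mathcal{S}_2]$ be a minimal right ideal of class $\lambda$ and $\hat{\mathfrak{r}} \subset \mathbb{K}[\mathcal{S}_3]$ a minimal right ideal of class $\hat{\lambda}$. Then for all $T \in \mathcal{T}_{\mathfrak{r}} \subseteq \mathcal{T}_2 V$ and all $\hat{T} \in \mathcal{T}_{\hat{\mathfrak{r}}} \subseteq \mathcal{T}_3 V$ we have $$y_{t'}^{\ast}(T\otimes \hat{T}) = 0 \quad\text{and}\quad y_{t'}^{\ast}(\hat{T}\otimes T) = 0 .$$ Consequently, nonzero algebraic covariant derivative curvature tensors of the form $y_{t'}^{\ast}(T\otimes\hat T)$ or $y_{t'}^{\ast}(\hat T\otimes T)$ with $T,\hat T$ in symmetry classes defined by minimal right ideals can only arise when the classes of these ideals are given by one of the three pairs $((2),(3))$, $((2),(2\,1))$, $((1^2),(2\,1))$.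
   Context: $\mathbb{K}=\mathbb{R}$ or $\mathbb{C}$; $V$ is a finite-dimensional $\mathbb{K}$-vector space and $\mathcal{T}_r V$ the space of $r$-times covariant tensors (multilinear maps $V^r\to\mathbb{K}$). For $T\in\mathcal{T}_2V$, $\hat T\in\mathcal{T}_3V$, $(T\otimes\hat T)(v_1,\dots,v_5)=T(v_1,v_2)\hat T(v_3,v_4,v_5)$ and $(\hat T\otimes T)(v_1,\dots,v_5)=\hat T(v_1,v_2,v_3)T(v_4,v_5)$. Permutations multiply by $(p\circ q)(i)=p(q(i))$. An element $a=\sum_{p\in\mathcal{S}_r}a(p)\,p$ of the group ring $\mathbb{K}[\mathcal{S}_r]$ acts on $T\in\mathcal{T}_rV$ by $(aT)(v_1,\dots,v_r)=\sum_p a(p)\,T(v_{p(1)},\dots,v_{p(r)})$, and $a^{\ast}:=\sum_p a(p)\,p^{-1}$. For a right ideal $\mathfrak{r}\subseteq\mathbb{K}[\mathcal{S}_r]$, the symmetry class is $\mathcal{T}_{\mathfrak{r}}=\{aT : a\in\mathfrak{r},\ T\in\mathcal{T}_rV\}$; if $e$ is a generating idempotent of $\mathfrak{r}$ then $\mathcal{T}_{\mathfrak r}=\{T: eT=T\}$. For a Young tableau $t$ with entries $1,\dots,r$, the Young symmetrizer is $y_t=\sum_{p\in\mathcal{H}_t}\sum_{q\in\mathcal{V}_t}\mathrm{sign}(q)\,p\circ q$, where $\mathcal{H}_t$ ($\mathcal{V}_t$) is the group of permutations preserving each row (column) of $t$. A minimal right ideal of $\mathbb{K}[\mathcal{S}_n]$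 is said to be of class $\lambda\vdash n$ if it is isomorphic (as right $\mathbb{K}[\mathcal{S}_n]$-module) to $y_t\,\mathbb{K}[\mathcal{S}_n]$ for a Young tableau $t$ of shape $\lambda$, equivalently if it lies in the minimal two-sided ideal of $\mathbb{K}[\mathcal{S}_n]$ corresponding to $\lambda$. Here $t'$ is the Young tableau with rows $(1,3,5)$ and $(2,4)$ (so columns $\{1,2\},\{3,4\},\{5\}$). An algebraic covariant derivative curvature tensor is a tensor $\mathfrak{R}'\in\mathcal{T}_5V$ with, for all $u,w,x,y,z\in V$: $\mathfrak R'(w,x,y,z,u)=-\mathfrak R'(w,x,z,y,u)=\mathfrak R'(y,z,w,x,u)$, $\mathfrak R'(w,x,y,z,u)+\mathfrak R'(w,y,z,x,u)+\mathfrak R'(w,z,x,y,u)=0$, and $\mathfrak R'(w,x,y,z,u)+\mathfrak R'(w,x,z,u,y)+\mathfrak R'(w,x,u,y,z)=0$. *)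

(* Defs.v *)
From Stdlib Require Import Rdefinitions.
From mathcomp Require Import Rstruct.
From mathcomp Require Import all_boot all_algebra all_fingroup.
From mathcomp.real_closed Require Import complex.

Set Implicit Arguments.
Unset Strict Implicit.
Unset Printing Implicit Defensive.

Import GRing.Theory.
Local Open Scope ring_scope.

(* Group ring K[S_r]: an element a = \sum_p a(p) p is its coefficient  *)
(* function on 'S_r.  Indices 1..r of the paper are 0..r-1 here.       *)

Definition GR (K : fieldType) (r : nat) := {ffun 'S_r -> K}.

(* The paper's composition (p o q)(i) = p(q(i)).  Note: MathComp's
   (q * p)%g is the function  i |-> p (q i). *)
Definition pcomp r (p q : 'S_r) : 'S_r := (q * p)%g.

Lemma pcompE r (p q : 'S_r) i : pcomp p q i = p (q i).
Proof. by rewrite /pcomp permM. Qed.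

Section GroupRing.
Variables (K : fieldType) (r : nat).

Definition gr0 : GR K r := [ffun => 0].
Definition gr_add (a b : GR K r) : GR K r := [ffun p => a p + b p].
Definition gr_scale (c : K) (a : GR K r) : GR K r := [ffun p => c * a p].

Definition gr_of (p : 'S_r) : GR K r := [ffun q => (q == p)%:R].

(* (a b) = \sum_{p,q} a(p) b(q) (p o q); coefficient at s *)
Definition gr_mul (a b : GR K r) : GR K r :=
  [ffun s => \sum_(p : 'S_r) a p * b (pcomp p^-1%g s)].

Definition gr_star (a : GR K r) : GR K r := [ffun p => a p^-1%g].

Definition right_ideal (I : GR K r -> Prop) : Prop :=
  [/\ I gr0,
      (forall a b, I a -> I b -> I (gr_add a b)),
      (forall c a, I a -> I (gr_scale c a)) &
      (forall a b, I a -> I (gr_mul a b))].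

Definition minimal_right_ideal (I : GR K r -> Prop) : Prop :=
  [/\ right_ideal I,
      (exists a, I a /\ a <> gr0) &
      (forall J, right_ideal J -> (forall a, J a -> I a) ->
          (forall a, J a -> a = gr0) \/ (forall a, I a -> J a))].

Definition rmod_iso (I J : GR K r -> Prop) : Prop :=
  exists f : GR K r -> GR K r,
    [/\ (forall a, I a -> J (f a)),
        (forall b, J b -> exists2 a, I a & f a = b),
        (forall a a', I a -> I a' -> f a = f a' -> a = a'),
        (forall c a a', I a -> I a' ->
            f (gr_add (gr_scale c a) a') = gr_add (gr_scale c (f a)) (f a')) &
        (forall a b, I a -> f (gr_mul a b) = gr_mul (f a) b)].

End GroupRing.

Definition is_partition (n : nat) (l : seq nat) : bool :=
  [&& sorted (fun a b : nat => leq b a) l, all (fun k => leq 1 k) l & sumn l == n].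

(* A Young tableau with entries 1..r (here 0..r-1) is given by the
   row and column index of each entry. *)
Record tableau (r : nat) := Tableau { trow : 'I_r -> nat; tcol : 'I_r -> nat }.

Definition tableau_of_shape r (t : tableau r) (l : seq nat) : Prop :=
  [/\ is_partition r l,
      (forall i, trow t i < size l /\ tcol t i < nth 0 l (trow t i))%N &
      (forall i j, trow t i = trow t j -> tcol t i = tcol t j -> i = j)].

Definition row_perm r (t : tableau r) (p : 'S_r) : bool :=
  [forall i, trow t (p i) == trow t i].
Definition col_perm r (t : tableau r) (q : 'S_r) : bool :=
  [forall i, tcol t (q i) == tcol t i].

Definition young_sym (K : fieldType) r (t : tableau r) : GR K r :=
  [ffun s => \sum_(p : 'S_r | row_perm t p) \sum_(q : 'S_r | col_perm t q)
               (if pcomp p q == s then (-1) ^+ odd_perm q else 0)].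

Arguments young_sym K {r} t.

Definition young_ideal (K : fieldType) r (t : tableau r) : GR K r -> Prop :=
  fun b => exists x, b = gr_mul (young_sym K t) x.

Arguments young_ideal K {r} t.

Definition of_class (K : fieldType) r (l : seq nat) (I : GR K r -> Prop) :=
  exists t : tableau r, tableau_of_shape t l /\ rmod_iso I (young_ideal K t).

(* t' : rows (1,3,5),(2,4); columns {1,2},{3,4},{5}.  With 0-based
   entries i: row = i mod 2, column = i / 2. *)
Definition t' : tableau 5 := Tableau (fun i => (i %% 2)%N) (fun i => (i %/ 2)%N).

Definition tensor (K : fieldType) (V : vectType K) (r : nat) :=
  {ffun 'I_r -> V} -> K.

Definition multilinear (K : fieldType) (V : vectType K) r (T : tensor V r) :=
  forall (i : 'I_r) (v : {ffun 'I_r -> V}) (c : K) (x y : V),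
    T [ffun j => if j == i then c *: x + y else v j] =
    c * T [ffun j => if j == i then x else v j]
      + T [ffun j => if j == i then y else v j].

Definition gr_act (K : fieldType) (V : vectType K) r (a : GR K r)
    (T : tensor V r) : tensor V r :=
  fun v => \sum_(p : 'S_r) a p * T [ffun i => v (p i)].

Definition tprod (K : fieldType) (V : vectType K) r s
    (T : tensor V r) (S : tensor V s) : tensor V (r + s) :=
  fun v => T [ffun i => v (lshift s i)] * S [ffun j => v (rshift r j)].

Definition in_symclass (K : fieldType) (V : vectType K) r
    (I : GR K r -> Prop) (T : tensor V r) : Prop :=
  exists a, exists2 T0 : tensor V r, I a /\ multilinear T0 &
    forall v, T v = gr_act a T0 v.

Definition excluded_pair (l lh : seq nat) : bool :=
  ((l == [:: 2%N]) && (lh == [:: 3%N])) ||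
  ((l == [:: 2%N]) && (lh == [:: 2%N; 1%N])) ||
  ((l == [:: 1%N; 1%N]) && (lh == [:: 2%N; 1%N])).

Definition theorem1p8_claim (K : fieldType) : Prop :=
  forall (l lh : seq nat),
    is_partition 2 l -> is_partition 3 lh -> ~~ excluded_pair l lh ->
  forall (V : vectType K) (I : GR K 2 -> Prop) (Ih : GR K 3 -> Prop),
    minimal_right_ideal I -> of_class l I ->
    minimal_right_ideal Ih -> of_class lh Ih ->
  forall (T : tensor V 2) (Th : tensor V 3),
    in_symclass I T -> in_symclass Ih Th ->
  forall v : {ffun 'I_5 -> V},
    gr_act (gr_star (young_sym K t')) (tprod T Th) v = 0 /\
    gr_act (gr_star (young_sym K t')) (tprod Th T) v = 0.

(* Main.v *)
Require Import Defs.
From Stdlib Require Import Rdefinitions.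
From mathcomp Require Import Rstruct.
From mathcomp Require Import all_boot all_algebra all_fingroup.
From mathcomp.real_closed Require Import complex.
From mathcomp Require Import ring zify.
Require Import Defs.
Set Implicit Arguments. Unset Strict Implicit. Unset Printing Implicit Defensive.
Import GRing.Theory Num.Theory.
Local Open Scope ring_scope.


Definition o0 : 'I_5 := @Ordinal 5 0 isT.
Definition o1 : 'I_5 := @Ordinal 5 1 isT.
Definition o2 : 'I_5 := @Ordinal 5 2 isT.
Definition o3 : 'I_5 := @Ordinal 5 3 isT.
Definition o4 : 'I_5 := @Ordinal 5 4 isT.
Definition ords := [:: o0; o1; o2; o3; o4].

Lemma ordsP (i : 'I_5) : i \in ords.
Proof. by case: i => [[|[|[|[|[|//]]]]] h]. Qed.

Definition valid5 (s : seq 'I_5) := uniq s && (size s == 5)%N.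

Lemma mk_inj (s : seq 'I_5) : valid5 s -> injective (fun i : 'I_5 => nth ord0 s i).
Proof.
case/andP=> us /eqP ss i j /eqP; rewrite nth_uniq ?ss // => /eqP h; exact: val_inj.
Qed.

Definition mk (s : seq 'I_5) : 'S_5 :=
  match (insub s : option {x : seq 'I_5 | valid5 x}) with
  | Some u => perm (mk_inj (valP u))
  | None => 1%g
  end.

Lemma mkE s i : valid5 s -> mk s i = nth ord0 s i.
Proof. by move=> h; rewrite /mk insubT /= permE. Qed.

Definition code (p : 'S_5) : seq nat := [seq val (p i) | i <- ords].

Lemma code_inj : injective code.
Proof.
move=> p q /= [e0 e1 e2 e3 e4]; apply/permP => i.
by apply/val_inj; move: (ordsP i); rewrite !inE => /or4P [| | |/orP[]] /eqP->.
Qed.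

Fixpoint tup n : seq (seq nat) :=
  if n is n'.+1 then [seq x :: t | x <- iota 0 5, t <- tup n'] else [:: [::]].

Lemma mem_tup n a : size a = n -> all (fun x => x < 5)%N a -> a \in tup n.
Proof.
elim: n a => [|n IH] [|x a] // /succn_inj sa /andP[xl al].
by apply: (allpairs_f_dep (fun x t => x :: t)); [rewrite mem_iota | exact: IH].
Qed.

Definition okp (f : nat -> nat) (a : seq nat) :=
  uniq a && all (fun i => f (nth 0%N a i) == f i) (iota 0 5).
Definition complete f (C : seq (seq nat)) := all (fun a => okp f a ==> (a \in C)) (tup 5).

Lemma codemk s : valid5 s -> code (mk s) = map val s.
Proof.
move=> vs; rewrite /code /= !mkE //; case/andP: vs => _ /eqP.
by case: s => [|a [|b [|c [|d [|e [|? ?]]]]]].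
Qed.

Lemma enum_sum (K : zmodType) (P : pred 'S_5) (f : nat -> nat) (L : seq (seq 'I_5))
    (F : 'S_5 -> K) :
  (forall p, P p = [forall i, f (p i) == f i]) ->
  all valid5 L ->
  all (fun s => all (fun i : 'I_5 => f (nth ord0 s i) == f i) ords) L ->
  uniq (map (map val) L) ->
  complete f (map (map val) L) ->
  \sum_(p | P p) F p = \sum_(s <- L) F (mk s).
Proof.
move=> hP vL sL uL cL.
rewrite -[LHS]big_filter -(big_map mk xpredT F); apply: perm_big; apply: uniq_perm.
- by rewrite filter_uniq // index_enum_uniq.
- have e : map (code \o mk) L = map (map val) L.
    by apply/eq_in_map => s sL0; rewrite /= codemk //; exact: (allP vL).
  by rewrite -(map_inj_uniq code_inj) -map_comp e.
move=> p; rewrite mem_filter mem_index_enum andbT hP; apply/idP/idP.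
- move/forallP => hp.
  have : code p \in map (map val) L.
    have ht : code p \in tup 5 by apply: mem_tup; rewrite /code //= !ltn_ord.
    move/implyP: (allP cL _ ht); apply.
    rewrite /okp; apply/andP; split.
      rewrite /code map_inj_uniq //; by move=> i j /val_inj/perm_inj.
    by rewrite /= !hp.
  case/mapP => s sL0 cs.
  have -> : p = mk s by apply: code_inj; rewrite codemk ?cs //; exact: (allP vL).
  exact: map_f.
- case/mapP => s sL0 ->; apply/forallP => i.
  rewrite mkE; last exact: (allP vL).
  by have /allP /(_ i (ordsP i)) := allP sL s sL0.
Qed.

Lemma predV n (f : nat -> nat) (p : 'S_n) :
  [forall i, f (p^-1%g i) == f i] = [forall i, f (p i) == f i].
Proof.
suff h q : [forall i, f ((q : 'S_n) i) == f i] -> [forall i, f (q^-1%g i) == f i].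
  by apply/idP/idP => [/h|/h]; rewrite ?invgK.
move/forallP=> hq; apply/forallP=> i.
by have := hq (q^-1%g i); rewrite permKV eq_sym.
Qed.

Definition LH := [:: [:: o0;o1;o2;o3;o4]; [:: o0;o3;o2;o1;o4]; [:: o0;o1;o4;o3;o2]; [:: o0;o3;o4;o1;o2];
    [:: o2;o1;o0;o3;o4]; [:: o2;o3;o0;o1;o4]; [:: o2;o1;o4;o3;o0]; [:: o2;o3;o4;o1;o0];
    [:: o4;o1;o0;o3;o2]; [:: o4;o3;o0;o1;o2]; [:: o4;o1;o2;o3;o0]; [:: o4;o3;o2;o1;o0]].
Definition LV := [:: [:: o0;o1;o2;o3;o4]; [:: o1;o0;o2;o3;o4]; [:: o0;o1;o3;o2;o4]; [:: o1;o0;o3;o2;o4]].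

Lemma sumH (K : zmodType) (F : 'S_5 -> K) :
  \sum_(p | row_perm t' p) F p = \sum_(s <- LH) F (mk s).
Proof. by apply: (@enum_sum _ _ (fun n => n %% 2)%N). Qed.

Lemma sumV (K : zmodType) (F : 'S_5 -> K) :
  \sum_(p | col_perm t' p) F p = \sum_(s <- LV) F (mk s).
Proof. by apply: (@enum_sum _ _ (fun n => n %/ 2)%N). Qed.

Lemma row_permV (p : 'S_5) : row_perm t' p^-1 = row_perm t' p.
Proof. exact: (predV (fun n => n %% 2)%N). Qed.
Lemma col_permV (p : 'S_5) : col_perm t' p^-1 = col_perm t' p.
Proof. exact: (predV (fun n => n %/ 2)%N). Qed.

Lemma ysum (K : fieldType) (V : vectType K) (X : tensor V 5) v :
  gr_act (gr_star (young_sym K t')) X v =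
  \sum_(s <- LH) \sum_(s' <- LV) (-1) ^+ odd_perm (mk s') * X [ffun i => v (mk s' (mk s i))].
Proof.
rewrite /gr_act.
under eq_bigr do rewrite !ffunE big_distrl /=.
under eq_bigr do under eq_bigr do rewrite big_distrl.
rewrite exchange_big /=.
under eq_bigr do rewrite exchange_big /=.
have inner p q : \sum_(s : 'S_5)
    (if pcomp p q == s^-1%g then (-1) ^+ odd_perm q else 0) * X [ffun i => v (s i)]
    = (-1) ^+ odd_perm q * X [ffun i => v ((pcomp p q)^-1%g i)] :> K.
  rewrite (bigD1 (pcomp p q)^-1%g) //= invgK eqxx big1 ?addr0 // => s hs.
  by rewrite ifN ?mul0r //; apply: contra hs => /eqP ->; rewrite invgK.
under eq_bigr do under eq_bigr do rewrite inner.
rewrite (reindex_inj invg_inj) /=.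
under eq_bigl do rewrite row_permV.
under eq_bigr do rewrite (reindex_inj invg_inj) /=.
under eq_bigr do under eq_bigl do rewrite col_permV.
rewrite sumH; apply: eq_bigr => s _; rewrite sumV; apply: eq_bigr => s' _.
rewrite odd_permV /pcomp invMg !invgK; congr (_ * X _); apply/ffunP => i.
by rewrite !ffunE permM.
Qed.

Lemma gr_mul_of (K : fieldType) n (a : GR K n) (s r0 : 'S_n) :
  gr_mul a (gr_of K s) r0 = a (s^-1 * r0)%g.
Proof.
rewrite ffunE (bigD1 (s^-1 * r0)%g) //= big1 ?addr0.
  by rewrite ffunE /pcomp invMg invgK mulgA mulgV mul1g eqxx mulr1.
move=> p hp; rewrite ffunE /pcomp; case: eqP => [e|]; last by rewrite mulr0.
by move: hp; rewrite -e invMg invgK -mulgA mulVg mulg1 eqxx.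
Qed.

Definition eps (K : ringType) (b : bool) n (p : 'S_n) : K :=
  if b then (-1) ^+ odd_perm p else 1.

Lemma epsM (K : ringType) b n (p q : 'S_n) : eps K b (p * q)%g = eps K b p * eps K b q.
Proof. by rewrite /eps; case: b; rewrite ?mulr1 // odd_permM signr_addb. Qed.

Lemma epsV (K : ringType) b n (p : 'S_n) : eps K b p^-1%g = eps K b p.
Proof. by rewrite /eps odd_permV. Qed.

Lemma young_row (K : fieldType) n (t : tableau n) s :
  tableau_of_shape t [:: n] -> young_sym K t s = 1.
Proof.
case=> _ hb hinj.
have r0 i : trow t i = 0%N by have [h _] := hb i; move: h; rewrite /= ltnS leqn0 => /eqP.
have colP q : col_perm t q = (q == 1%g).
  apply/idP/idP => [/forallP hq|/eqP ->]; last by apply/forallP=> i; rewrite perm1.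
  apply/eqP/permP => i; rewrite perm1; apply: hinj; [by rewrite !r0 | exact/eqP].
have rowP p : row_perm t p by apply/forallP => i; rewrite !r0.
rewrite ffunE.
under eq_bigr do rewrite (big_pred1 1%g colP) /pcomp mul1g odd_perm1 expr0.
rewrite (eq_bigl xpredT) //= -big_mkcond /= big_pred1_eq //.
Qed.

Lemma young_col (K : fieldType) n (t : tableau n) s :
  tableau_of_shape t (nseq n 1%N) -> young_sym K t s = (-1) ^+ odd_perm s.
Proof.
case=> _ hb hinj.
have c0 i : tcol t i = 0%N.
  have [h1 h2] := hb i; move: h2; rewrite nth_nseq; rewrite size_nseq in h1.
  by rewrite h1 ltnS leqn0 => /eqP.
have rowP p : row_perm t p = (p == 1%g).
  apply/idP/idP => [/forallP hq|/eqP ->]; last by apply/forallP=> i; rewrite perm1.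
  apply/eqP/permP => i; rewrite perm1; apply: hinj; [exact/eqP | by rewrite !c0].
have colP q : col_perm t q by apply/forallP => i; rewrite !c0.
rewrite ffunE (big_pred1 1%g rowP) (eq_bigl xpredT) //=.
under eq_bigr do rewrite /pcomp mulg1.
by rewrite -big_mkcond /= big_pred1_eq.
Qed.

Lemma ideal_eps (K : fieldType) n (b : bool) (I : GR K n -> Prop) (l : seq nat) :
  right_ideal I -> of_class l I ->
  (forall t : tableau n, tableau_of_shape t l -> forall s, young_sym K t s = eps K b s) ->
  forall a, I a -> forall r, a r = eps K b r * a 1%g.
Proof.
move=> [I0 Iadd Iscale Imul] [t [sh [f [fIJ fsurj finj flin fmul]]]] hy a Ia.
have yt s := hy t sh s.
have J1 x r : gr_mul (young_sym K t) x r = eps K b r * gr_mul (young_sym K t) x 1%g.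
  rewrite !ffunE (reindex_inj (mulIg r)) /= mulr_sumr; apply: eq_bigr => p _.
  by rewrite !yt epsM /pcomp invMg mulgA mulgV !mul1g mulrA [eps K b p * _]mulrC.
have J2 c s : young_ideal K t c -> gr_mul c (gr_of K s) = gr_scale (eps K b s) c.
  case=> x ->; apply/ffunP => r; rewrite gr_mul_of J1 [in RHS]ffunE (J1 x r) epsM epsV mulrA //.
have e1 y : gr_add y (gr0 K n) = y by apply/ffunP => p; rewrite !ffunE addr0.
have f0 : f (gr0 K n) = gr0 K n.
  have := flin 1 (gr0 _ _) (gr0 _ _) I0 I0.
  have -> : gr_scale 1 (gr0 K n) = gr0 K n by apply/ffunP => p; rewrite !ffunE mulr0.
  rewrite e1 => /ffunP h; apply/ffunP => p; have := h p; rewrite !ffunE mul1r => e.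
  by apply: (addrI (f (gr0 K n) p)); rewrite addr0 -e.
have fs c x : I x -> f (gr_scale c x) = gr_scale c (f x).
  by move=> Ix; have := flin c x (gr0 _ _) Ix I0; rewrite f0 !e1.
have key s : gr_mul a (gr_of K s) = gr_scale (eps K b s) a.
  apply: finj; [exact: Imul | exact: Iscale | ].
  by rewrite fmul // fs // J2 //; exact: fIJ.
move=> r; have := congr1 (fun g : GR K n => g 1%g) (key r^-1%g).
by rewrite /= gr_mul_of ffunE invgK mulg1 epsV.
Qed.

Lemma symclass_eps (K : fieldType) (V : vectType K) n b (I : GR K n -> Prop)
    (T : tensor V n) :
  (forall a, I a -> forall r, a r = eps K b r * a 1%g) -> in_symclass I T ->
  forall (w : {ffun 'I_n -> V}) (s : 'S_n), T [ffun i => w (s i)] = eps K b s * T w.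
Proof.
move=> hI [a [T0 [Ia _] hT]] w s; rewrite !hT /gr_act.
rewrite (reindex_inj (mulIg s^-1%g)) /= mulr_sumr; apply: eq_bigr => p _.
have -> : [ffun i => [ffun i0 => w (s i0)] ((p * s^-1)%g i)] = [ffun i => w (p i)].
  by apply/ffunP => i; rewrite !ffunE permM permKV.
rewrite (hI a Ia (p * s^-1)%g) (hI a Ia p) epsM epsV; ring.
Qed.

Definition p20 : 'I_2 := @Ordinal 2 0 isT.
Definition p21 : 'I_2 := @Ordinal 2 1 isT.
Definition p30 : 'I_3 := @Ordinal 3 0 isT.
Definition p31 : 'I_3 := @Ordinal 3 1 isT.
Definition p32 : 'I_3 := @Ordinal 3 2 isT.

Definition T2 (K : fieldType) (V : vectType K) (T : tensor V 2) (x y : V) : K :=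
  T [ffun i : 'I_2 => nth x [:: x; y] i].
Definition T3 (K : fieldType) (V : vectType K) (T : tensor V 3) (x y z : V) : K :=
  T [ffun i : 'I_3 => nth x [:: x; y; z] i].

Lemma tprod23 (K : fieldType) (V : vectType K) (T : tensor V 2) (S : tensor V 3)
    (w : {ffun 'I_5 -> V}) :
  tprod T S w = T2 T (w o0) (w o1) * T3 S (w o2) (w o3) (w o4).
Proof.
rewrite /tprod /T2 /T3; congr (T _ * S _); apply/ffunP => i; rewrite !ffunE;
  case: i => [[|[|[|//]]] h] /=; congr (w _); exact: val_inj.
Qed.

Lemma tprod32 (K : fieldType) (V : vectType K) (S : tensor V 3) (T : tensor V 2)
    (w : {ffun 'I_5 -> V}) :
  tprod S T w = T3 S (w o0) (w o1) (w o2) * T2 T (w o3) (w o4).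
Proof.
rewrite /tprod /T2 /T3; congr (S _ * T _); apply/ffunP => i; rewrite !ffunE;
  case: i => [[|[|[|//]]] h] /=; congr (w _); exact: val_inj.
Qed.

Lemma tpermE' n (x y z : 'I_n) : tperm x y z = if z == x then y else if z == y then x else z.
Proof.
case: tpermP => [->|->|/eqP/negPf -> /eqP/negPf ->] //; first by rewrite eqxx.
by case: eqP => [->|]; rewrite ?eqxx.
Qed.

Definition sb (K : ringType) (b : bool) : K := if b then -1 else 1.

Lemma eps_tperm (K : ringType) b n (x y : 'I_n) : x != y -> eps K b (tperm x y) = sb K b.
Proof. by move=> h; rewrite /eps /sb odd_tperm h. Qed.

Lemma T2swap (K : fieldType) (V : vectType K) (T : tensor V 2) b :
  (forall (w : {ffun 'I_2 -> V}) (s : 'S_2), T [ffun i => w (s i)] = eps K b s * T w) ->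
  forall x y, T2 T y x = sb K b * T2 T x y.
Proof.
move=> hT x y; rewrite /T2 -(eps_tperm K b (x:=p20) (y:=p21)) // -hT; congr T.
by apply/ffunP => i; rewrite !ffunE tpermE'; case: i => [[|[|//]] h].
Qed.

Lemma T3swap01 (K : fieldType) (V : vectType K) (T : tensor V 3) b :
  (forall (w : {ffun 'I_3 -> V}) (s : 'S_3), T [ffun i => w (s i)] = eps K b s * T w) ->
  forall x y z, T3 T y x z = sb K b * T3 T x y z.
Proof.
move=> hT x y z; rewrite /T3 -(eps_tperm K b (x:=p30) (y:=p31)) // -hT; congr T.
by apply/ffunP => i; rewrite !ffunE tpermE'; case: i => [[|[|[|//]]] h].
Qed.

Lemma T3swap12 (K : fieldType) (V : vectType K) (T : tensor V 3) b :
  (forall (w : {ffun 'I_3 -> V}) (s : 'S_3), T [ffun i => w (s i)] = eps K b s * T w) ->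
  forall x y z, T3 T x z y = sb K b * T3 T x y z.
Proof.
move=> hT x y z; rewrite /T3 -(eps_tperm K b (x:=p31) (y:=p32)) // -hT; congr T.
by apply/ffunP => i; rewrite !ffunE tpermE'; case: i => [[|[|[|//]]] h].
Qed.

Definition N2 (K : fieldType) (V : vectType K) (T : tensor V 2) b (x y : V) : K :=
  (T2 T x y + sb K b * T2 T y x) / 2%:R.
Definition N3 (K : fieldType) (V : vectType K) (T : tensor V 3) b (x y z : V) : K :=
  (T3 T x y z + sb K b * T3 T y x z + sb K b * T3 T x z y + T3 T y z x + T3 T z x y
   + sb K b * T3 T z y x) / 6%:R.

Lemma T2N (K : numFieldType) (V : vectType K) (T : tensor V 2) b :
  (forall (w : {ffun 'I_2 -> V}) (s : 'S_2), T [ffun i => w (s i)] = eps K b s * T w) ->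
  forall x y, T2 T x y = N2 T b x y.
Proof.
move=> hT x y; rewrite /N2 (T2swap hT x y).
have h2 : (2%:R : K) != 0 by rewrite pnatr_eq0.
by clear hT; rewrite /sb; case: b; field.
Qed.

Lemma T3N (K : numFieldType) (V : vectType K) (T : tensor V 3) b :
  (forall (w : {ffun 'I_3 -> V}) (s : 'S_3), T [ffun i => w (s i)] = eps K b s * T w) ->
  forall x y z, T3 T x y z = N3 T b x y z.
Proof.
move=> hT x y z; rewrite /N3 (T3swap01 hT x y z) (T3swap12 hT x y z).
rewrite (T3swap12 hT y x z) (T3swap01 hT x y z).
rewrite (T3swap01 hT x z y) (T3swap12 hT x y z).
rewrite (T3swap01 hT y z x) (T3swap12 hT y x z) (T3swap01 hT x y z).
have h6 : (6%:R : K) != 0 by rewrite pnatr_eq0.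
by clear hT; rewrite /sb; case: b; field.
Qed.

Lemma mkV0 : mk [:: o0;o1;o2;o3;o4] = 1%g.
Proof.
by apply/permP => i; rewrite mkE // ?perm1; case: i => [[|[|[|[|[|//]]]]] h]; apply: val_inj.
Qed.
Lemma mkV1 : mk [:: o1;o0;o2;o3;o4] = tperm o0 o1.
Proof.
by apply/permP => i; rewrite mkE // tpermE'; case: i => [[|[|[|[|[|//]]]]] h]; apply: val_inj.
Qed.
Lemma mkV2 : mk [:: o0;o1;o3;o2;o4] = tperm o2 o3.
Proof.
by apply/permP => i; rewrite mkE // tpermE'; case: i => [[|[|[|[|[|//]]]]] h]; apply: val_inj.
Qed.
Lemma mkV3 : mk [:: o1;o0;o3;o2;o4] = (tperm o0 o1 * tperm o2 o3)%g.
Proof.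
by apply/permP => i; rewrite mkE // permM !tpermE'; case: i => [[|[|[|[|[|//]]]]] h]; apply: val_inj.
Qed.

Lemma sgV0 (K : ringType) : (-1) ^+ odd_perm (mk [:: o0;o1;o2;o3;o4]) = 1 :> K.
Proof. by rewrite mkV0 odd_perm1. Qed.
Lemma sgV1 (K : ringType) : (-1) ^+ odd_perm (mk [:: o1;o0;o2;o3;o4]) = -1 :> K.
Proof. by rewrite mkV1 odd_tperm. Qed.
Lemma sgV2 (K : ringType) : (-1) ^+ odd_perm (mk [:: o0;o1;o3;o2;o4]) = -1 :> K.
Proof. by rewrite mkV2 odd_tperm. Qed.
Lemma sgV3 (K : ringType) : (-1) ^+ odd_perm (mk [:: o1;o0;o3;o2;o4]) = 1 :> K.
Proof. by rewrite mkV3 odd_permM !odd_tperm. Qed.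



Definition vv (K : fieldType) (V : vectType K) (v : {ffun 'I_5 -> V}) (n : nat) : V := v (inord n).
Definition comp (s s' : seq 'I_5) : seq nat := map (fun i : 'I_5 => val (nth ord0 s' (nth ord0 s i))) ords.
Definition sgc (s' : seq 'I_5) : bool :=
  (val (nth ord0 s' 0) != 0%N) (+) (val (nth ord0 s' 2) != 2%N).
Definition L48 := [seq (sgc s', comp s s') | s <- LH, s' <- LV].

Lemma sgc_ok (K : ringType) s' : s' \in LV ->
  (-1) ^+ odd_perm (mk s') = (if sgc s' then -1 else 1) :> K.
Proof.
rewrite !inE => /or4P [] /eqP ->; rewrite ?sgV0 ?sgV1 ?sgV2 ?sgV3 //.
Qed.

Lemma evalX (K : fieldType) (V : vectType K) (X : tensor V 5) (v : {ffun 'I_5 -> V}) s s' :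
  valid5 s -> valid5 s' ->
  X [ffun i => v (mk s' (mk s i))] = X [ffun i : 'I_5 => vv v (nth 0%N (comp s s') i)].
Proof.
move=> hs hs'; congr X; apply/ffunP => i; rewrite !ffunE !mkE // /vv.
by case: i => [[|[|[|[|[|//]]]]] h]; rewrite /= inord_val.
Qed.

Lemma ysum2 (K : fieldType) (V : vectType K) (X : tensor V 5) (v : {ffun 'I_5 -> V}) :
  gr_act (gr_star (young_sym K t')) X v =
  \sum_(x <- L48) (if x.1 then -1 else 1) * X [ffun i : 'I_5 => vv v (nth 0%N x.2 i)].
Proof.
rewrite ysum /L48 big_allpairs_dep /=; apply: eq_big_seq => s sH.
apply: eq_big_seq => s' sV.
rewrite sgc_ok // evalX //; [exact: (allP (isT : all valid5 LH)) | exact: (allP (isT : all valid5 LV))].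
Qed.

Lemma bigfold (K : zmodType) (T : Type) (l : seq T) (F : T -> K) :
  \sum_(x <- l) F x = foldr (fun x a => F x + a) 0 l.
Proof. by elim: l => [|x l IH]; rewrite ?big_nil ?big_cons ?IH. Qed.

Lemma L48E : L48 = ltac:(let x := eval vm_compute in L48 in exact x).
Proof. by vm_compute. Qed.

Lemma fin1a (K : numFieldType) (V : vectType K) (T : tensor V 2) (Th : tensor V 3) :
  (forall (w : {ffun 'I_3 -> V}) (s : 'S_3), Th [ffun i => w (s i)] = eps K true s * Th w) ->
  forall v, gr_act (gr_star (young_sym K t')) (tprod T Th) v = 0.
Proof.
move=> hTh v. rewrite ysum2.
under eq_bigr do rewrite tprod23 !ffunE (T3N hTh).
rewrite L48E bigfold.
cbn [foldr nth fst snd].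
rewrite /N3 /sb.
ring.
Qed.

Lemma fin1b (K : numFieldType) (V : vectType K) (T : tensor V 2) (Th : tensor V 3) :
  (forall (w : {ffun 'I_3 -> V}) (s : 'S_3), Th [ffun i => w (s i)] = eps K true s * Th w) ->
  forall v, gr_act (gr_star (young_sym K t')) (tprod Th T) v = 0.
Proof.
move=> hTh v. rewrite ysum2.
under eq_bigr do rewrite tprod32 !ffunE (T3N hTh).
rewrite L48E bigfold; cbn [foldr nth fst snd]; rewrite /N3 /sb.
ring.
Qed.

Lemma fin2a (K : numFieldType) (V : vectType K) (T : tensor V 2) (Th : tensor V 3) :
  (forall (w : {ffun 'I_2 -> V}) (s : 'S_2), T [ffun i => w (s i)] = eps K true s * T w) ->
  (forall (w : {ffun 'I_3 -> V}) (s : 'S_3), Th [ffun i => w (s i)] = eps K false s * Th w) ->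
  forall v, gr_act (gr_star (young_sym K t')) (tprod T Th) v = 0.
Proof.
move=> hT hTh v. rewrite ysum2.
under eq_bigr do rewrite tprod23 !ffunE (T3N hTh) (T2N hT).
rewrite L48E bigfold; cbn [foldr nth fst snd]; rewrite /N3 /N2 /sb.
ring.
Qed.

Lemma fin2b (K : numFieldType) (V : vectType K) (T : tensor V 2) (Th : tensor V 3) :
  (forall (w : {ffun 'I_2 -> V}) (s : 'S_2), T [ffun i => w (s i)] = eps K true s * T w) ->
  (forall (w : {ffun 'I_3 -> V}) (s : 'S_3), Th [ffun i => w (s i)] = eps K false s * Th w) ->
  forall v, gr_act (gr_star (young_sym K t')) (tprod Th T) v = 0.
Proof.
move=> hT hTh v. rewrite ysum2.
under eq_bigr do rewrite tprod32 !ffunE (T3N hTh) (T2N hT).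
rewrite L48E bigfold; cbn [foldr nth fst snd]; rewrite /N3 /N2 /sb.
ring.
Qed.


Ltac splitall H :=
  match type of H with
  | is_true (_ && _) => let H1 := fresh "H" in let H2 := fresh "H" in
      case/andP: H => H1 H2; splitall H2
  | _ => idtac
  end.

Lemma part2 l : is_partition 2 l -> l = [:: 2%N] \/ l = [:: 1%N; 1%N].
Proof.
case/and3P; case: l => [|a [|b [|c l]]] srt pos /eqP sm //=; move: srt pos sm => /= srt pos sm;
  splitall srt; splitall pos.
- by left; congr (_ :: _); lia.
- by right; congr [:: _; _]; lia.
- lia.
Qed.

Lemma part3 l : is_partition 3 l ->
  l = [:: 3%N] \/ l = [:: 2%N; 1%N] \/ l = [:: 1%N; 1%N; 1%N].
Proof.
case/and3P; case: l => [|a [|b [|c [|d l]]]] srt pos /eqP sm //=; move: srt pos sm => /= srt pos sm;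
  splitall srt; splitall pos.
- by left; congr (_ :: _); lia.
- by right; left; congr [:: _; _]; lia.
- by right; right; congr [:: _; _; _]; lia.
- lia.
Qed.

Lemma claimK (K : numFieldType) : theorem1p8_claim K.
Proof.
move=> l lh pl plh nex V I Ih [rI _ _] cI [rIh _ _] cIh T Th sT sTh v.
case: (part3 plh) => [e3|[e21|e111]].
- case: (part2 pl) => e2; first by move: nex; rewrite e2 e3.
  subst l lh.
  have hT := symclass_eps (ideal_eps (b := true) rI cI (fun t ht s => young_col K s ht)) sT.
  have hTh := symclass_eps (ideal_eps (b := false) rIh cIh (fun t ht s => young_row K s ht)) sTh.
  by split; [exact: fin2a | exact: fin2b].
- by case: (part2 pl) nex => ->; rewrite e21.
- subst lh.
  have hTh := symclass_eps (ideal_eps (b := true) rIh cIh (fun t ht s => young_col K s ht)) sTh.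
  by split; [exact: fin1a | exact: fin1b].
Qed.


Theorem theorem1p8 : theorem1p8_claim R /\ theorem1p8_claim R[i].
Proof. by split; apply: claimK. Qed.
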